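(* Let $\mathbf{X}=\{X^n\}_{n=1}^\infty$ (null hypothesis) and $\overline{\mathbf{X}}=\{\overline{X}^n\}_{n=1}^\infty$ (alternative hypothesis) be general sources with common alphabet $\mathcal{X}$, and let $\eta$ and $B_e(r\mid\mathbf{X}\|\overline{\mathbf{X}})$ be as defined in the context. Then for every $r\ge 0$, $$B_e(r\mid\mathbf{X}\|\overline{\mathbf{X}})=\inf_{R\in\mathbb{R}}\{R+\eta(R)\mid \eta(R)<r\},$$ where the infimum of the empty set is $+\infty$; in particular $B_e(0\mid\mathbf{X}\|\overline{\mathbf{X}})=+\infty$.
   Context: A general source $\mathbf{X}=\{X^n\}_{n=1}^\infty$ is a sequence of random variables $X^n$ taking values in $\mathcal{X}^n$, where $\mathcal{X}$ is an arbitrary abstract (measurable) set; no consistency between different $n$ is assumed. $P_Z$ denotes the distribution of a random variable $Z$. For $\mathbf{x}\in\mathcal{X}^n$, $\frac{P_{X^n}(\mathbf{x})}{P_{\overline{X}^n}(\mathbf{x})}$ denotes $g_n(\mathbf{x})$, the Radon–Nikodym derivative of $P_{X^n}$ with respect to $P_{\overline{X}^n}$, with the convention that $g_n=+\infty$ on a $P_{\overline{X}^n}$-null set carrying the singular part of $P_{X^n}$; $\frac{P_{X^n}(X^n)}{P_{\overline{X}^n}(X^n)}:=g_n(X^n)$. Logarithms are natural; $R+(+\infty)=+\infty$. Define $$\eta(R)=\liminf_{n\to\infty}\frac1n\log\frac{1}{\Pr\left\{\frac1n\log\frac{P_{X^n}(X^n)}{P_{\overline{X}^n}(X^n)}\le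 R\right\}}\in[0,+\infty].$$ For a measurable acceptance region $\mathcal{A}_n\subset\mathcal{X}^n$, let $\mu_n=\Pr\{X^n\notin\mathcal{A}_n\}$ (first kind error probability) and $\lambda_n=\Pr\{\overline{X}^n\in\mathcal{A}_n\}$ (second kind error probability). For $r\ge0$, a real $E$ is $r$-achievable if there exist acceptance regions $\mathcal{A}_n$ ($n=1,2,\dots$) with $\liminf_{n}\frac1n\log\frac1{\mu_n}\ge r$ and $\liminf_{n}\frac1n\log\frac1{\lambda_n}\ge E$. $B_e(r\mid\mathbf{X}\|\overline{\mathbf{X}})=\sup\{E\mid E\text{ is } r\text{-achievable}\}$. *)

(* Defs.v *)
From HB Require Import structures.
From mathcomp Require Import all_boot all_order all_algebra.
From mathcomp Require Import all_classical all_reals all_analysis.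
From mathcomp Require Import measurable_realfun lebesgue_integral.
Set Implicit Arguments. Unset Strict Implicit. Unset Printing Implicit Defensive.
Import Order.TTheory GRing.Theory Num.Theory.
Local Open Scope classical_set_scope.
Local Open Scope ring_scope.
Local Open Scope ereal_scope.

(* Natural logarithm on extended reals: log 0 = -oo, log (+oo) = +oo.
   (Values < 0 never occur below; they are sent to -oo.) *)
Definition elog {R : realType} (x : \bar R) : \bar R :=
  match x with
  | r%:E => if (0 < r)%R then (ln r)%:E else -oo
  | +oo => +oo
  | -oo => -oo
  end.

Definition rate {R : realType} (n : nat) (p : \bar R) : \bar R :=
  ((n%:R)^-1)%:E * - elog p.

(* g is a version of the Radon-Nikodym derivative dP/dQ on the tuple space,
   with g = +oo on a Q-null set N carrying the singular part of P:
   for every measurable A, P A = \int_{A \ N} g dQ + P (A `&` N). *)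
Definition RN_version {d} {R : realType} {T : measurableType d}
  (P Q : probability T R) (g : T -> \bar R) : Prop :=
  measurable_fun setT g /\ (forall x, 0 <= g x) /\
  exists N : set T, [/\ measurable N, Q N = 0, (forall x, N x -> g x = +oo) &
    forall A, measurable A ->
      P A = \int[Q]_(x in A `\` N) g x + P (A `&` N)].

Section hyp.
Context {d} {R : realType} {X : measurableType d}.
(* PX n, PXb n : distributions of X^n, Xbar^n on X^n = n.-tuple X *)
Variables (PX PXb : forall n, probability (n.-tuple X) R)
  (g : forall n, n.-tuple X -> \bar R).

Definition eta (Rr : R) : \bar R :=
  limn_einf (fun n => rate n
    (PX n [set x | ((n%:R)^-1)%:E * elog (g x) <= Rr%:E])).

Definition r_achievable (r E : R) : Prop :=
  exists A : forall n, set (n.-tuple X),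
    (forall n, measurable (A n)) /\
    r%:E <= limn_einf (fun n => rate n (PX n (~` A n))) /\
    E%:E <= limn_einf (fun n => rate n (PXb n (A n))).

Definition Be (r : R) : \bar R :=
  ereal_sup [set E%:E | E in [set E | r_achievable r E]].

Definition eta_inf (r : R) : \bar R :=
  ereal_inf [set Rr%:E + eta Rr | Rr in [set Rr | eta Rr < r%:E]].
End hyp.

(* Main.v *)
Require Import Defs.
From HB Require Import structures.
From mathcomp Require Import all_boot all_order all_algebra.
From mathcomp Require Import all_classical all_reals all_analysis.
From mathcomp Require Import measurable_realfun lebesgue_integral.
From mathcomp Require Import ring lra.
Import Order.TTheory GRing.Theory Num.Theory.
Local Open Scope classical_set_scope.
Local Open Scope ring_scope.
Local Open Scope ereal_scope.

Lemma einfE (R : realType) (u : (\bar R)^nat) :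
  limn_einf u = ereal_sup (range (einfs u)).
Proof. by rewrite limn_einf_lim; apply/cvg_lim => //; exact: cvg_einfs_sup. Qed.

Lemma liminf_ge {R : realType} {u : (\bar R)^nat} {c : \bar R} :
  (\forall n \near \oo, c <= u n) -> c <= limn_einf u.
Proof.
rewrite einfE => -[N _ HN]; apply: le_ereal_sup_tmp.
exists (einfs u N); first by exists N.
by apply: le_ereal_inf_tmp => _ [m /= Nm <-]; exact: HN.
Qed.

Lemma liminf_gt {R : realType} {u : (\bar R)^nat} {a : \bar R} :
  a < limn_einf u -> \forall n \near \oo, a < u n.
Proof.
rewrite einfE => /ereal_sup_gt [_ [N _ <-]] aN.
exists N => // n /= Nn; apply: (lt_le_trans aN).
by apply: ereal_inf_lbound; exists n.
Qed.

Lemma near_nat_gt (R : realType) (K : R) : \forall n \near \oo, (K < n%:R)%R.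
Proof.
have [K0|K0] := leP K 0%R.
  by exists 1%N => // n /= n1; apply: (le_lt_trans K0); rewrite ltr0n.
exists (Num.bound K) => // n /= Hn.
apply: (lt_le_trans (archi_boundP (ltW K0))); by rewrite ler_nat.
Qed.

Lemma rate_ge {R : realType} {n} {p : \bar R} {c : R} : (0 < n)%N ->
  p <= (expR (- (n%:R * c)))%:E -> c%:E <= rate n p.
Proof.
move=> n0; have nR : (0 < n%:R :> R)%R by rewrite ltr0n.
case: p => [x||] //=; rewrite /rate /elog.
  move=> hx; case: ifPn => x0.
    rewrite -EFinN -EFinM lee_fin ler_pdivlMl // lerNr.
    rewrite -(expRK (- (n%:R * c))%R) ler_ln // posrE ?expR_gt0 // -lee_fin.
  by rewrite /= mulry sgrV gtr0_sg // mul1e leey.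
by move=> _; rewrite /= mulry sgrV gtr0_sg // mul1e leey.
Qed.

Lemma rate_gt {R : realType} {n} {p : \bar R} {a : R} : (0 < n)%N ->
  a%:E < rate n p -> p <= (expR (- (n%:R * a)))%:E.
Proof.
move=> n0; have nR : (0 < n%:R :> R)%R by rewrite ltr0n.
case: p => [x||] //=; rewrite /rate /elog.
  case: ifPn => x0.
    rewrite -EFinN -EFinM lte_fin ltr_pdivlMl // ltrNr => h.
    rewrite lee_fin -(lnK x0) ler_expR; exact: ltW.
  by move=> _; rewrite lee_fin (le_trans _ (ltW (expR_gt0 _))) // leNgt.
by rewrite /= mulrNy sgrV gtr0_sg // mul1e ltNge leNye.
by move=> _; rewrite leNye.
Qed.

Lemma rate_ge0 {R : realType} {n} {p : \bar R} : p <= 1 -> 0 <= rate n p.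
Proof.
case: n => [|n] hp; first by rewrite /rate invr0 mul0e.
have nR : (0 < n.+1%:R :> R)%R by rewrite ltr0n.
case: p hp => [x||] //=; rewrite /rate /elog.
  case: ifPn => x0 hx.
    rewrite -EFinN -EFinM lee_fin mulr_ge0 // ?invr_ge0 ?(ltW nR) //.
    by rewrite oppr_ge0 ln_le0 // -lee_fin.
  by rewrite /= mulry sgrV gtr0_sg // mul1e leey.
by move=> _; rewrite /= mulry sgrV gtr0_sg // mul1e leey.
Qed.

Lemma ell_le (R : realType) n (x : \bar R) (t : R) : (0 < n)%N -> 0 <= x ->
  ((n%:R^-1)%:E * elog x <= t%:E) = (x <= (expR (n%:R * t))%:E).
Proof.
move=> n0; have nR : (0 < n%:R :> R)%R by rewrite ltr0n.
case: x => [x||] //= x0; rewrite /elog.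
  case: ifPn => xp.
    by rewrite -EFinM !lee_fin ler_pdivrMl // -ler_expR lnK.
  rewrite mulrNy sgrV gtr0_sg // mul1e leNye; apply/esym.
  by rewrite lee_fin (le_trans _ (ltW (expR_gt0 _))) // leNgt.
by rewrite mulry sgrV gtr0_sg // mul1e !leNgt !ltey.
Qed.

Lemma meas_le d (T : measurableType d) (R : realType) (g : T -> \bar R) (c : \bar R) :
  measurable_fun setT g -> measurable [set x | g x <= c].
Proof.
move=> mg; have := measurable_lee measurableT mg (measurable_cst c).
by rewrite setTI.
Qed.

Lemma RN_le d (T : measurableType d) (R : realType) (P Q : probability T R)
  (g : T -> \bar R) (a : R) (A : set T) :
  RN_version P Q g -> (0 <= a)%R -> measurable A ->
  (forall x, A x -> g x <= a%:E) -> P A <= a%:E * Q A.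
Proof.
move=> [mg [g0 [N [mN QN gN PA]]]] a0 mA Ha.
rewrite PA // (_ : A `&` N = set0) ?measure0 ?adde0; last first.
  apply/seteqP; split => [x [Ax Nx]|x //].
  by have := Ha x Ax; rewrite gN // leNgt ltey.
have mAN : measurable (A `\` N) by exact: measurableD.
apply: (@le_trans _ _ (\int[Q]_(x in A `\` N) (cst a%:E) x)).
  apply: ge0_le_integral => //.
  - exact: measurable_funS mg.
  - by move=> x [Ax _]; exact: Ha.
rewrite integral_cst //; apply: lee_wpmul2l; first by rewrite lee_fin.
by apply: le_measure; rewrite ?inE // => x [].
Qed.

Lemma RN_ge d (T : measurableType d) (R : realType) (P Q : probability T R)
  (g : T -> \bar R) (a : R) (A : set T) :
  RN_version P Q g -> (0 <= a)%R -> measurable A ->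
  (forall x, A x -> a%:E <= g x) -> a%:E * Q A <= P A.
Proof.
move=> [mg [g0 [N [mN QN gN PA]]]] a0 mA Ha.
have mAN : measurable (A `\` N) by exact: measurableD.
have QA : Q A <= Q (A `\` N).
  apply: (@le_trans _ _ (Q ((A `\` N) `|` N))).
    by apply: le_measure; rewrite ?inE //; [exact: measurableU|
      move=> x Ax; have [Nx|Nx] := pselect (N x); [right|left]].
  apply: (le_trans (measureU2 _ _ _)) => //.
  apply: (@le_trans _ _ (Q (A `\` N) + 0)); last by rewrite adde0.
  by apply: leeD => //; move/eqP: QN => QN; rewrite le_eqVlt QN.
apply: (@le_trans _ _ (a%:E * Q (A `\` N))).
  by apply: lee_wpmul2l; first by rewrite lee_fin.
rewrite PA //; apply: (le_trans _ (leeDl _ (measure_ge0 _ _))).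
rewrite -integral_cst //; apply: ge0_le_integral => //.
- exact: measurable_funS mg.
- by move=> x [Ax _]; exact: Ha.
Qed.

Definition Sl {d} {R : realType} {X : measurableType d}
  (g : forall n, n.-tuple X -> \bar R) n (t : R) : set (n.-tuple X) :=
  [set x | ((n%:R)^-1)%:E * elog (g n x) <= t%:E].

Lemma Sl_eq {d} {R : realType} {X : measurableType d}
  {PX PXb : forall n, probability (n.-tuple X) R}
  {g : forall n, n.-tuple X -> \bar R} {n t} :
  (forall n, RN_version (PX n) (PXb n) (g n)) -> (0 < n)%N ->
  Sl g n t = [set x | g n x <= (expR (n%:R * t))%:E].
Proof.
move=> RN n0; have [_ [g0 _]] := RN n.
by rewrite /Sl; apply/seteqP; split => x /=; rewrite ell_le.
Qed.

Lemma Sl_meas {d} {R : realType} {X : measurableType d}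
  {PX PXb : forall n, probability (n.-tuple X) R}
  {g : forall n, n.-tuple X -> \bar R} {n t} :
  (forall n, RN_version (PX n) (PXb n) (g n)) -> measurable (Sl g n t).
Proof.
move=> RN; case: n => [|n].
  have -> : Sl g 0 t = [set _ | 0 <= t%:E].
    by apply/seteqP; split => x; rewrite /Sl /= invr0 mul0e.
  have [t0|t0] := boolP (0 <= t%:E).
    by rewrite (_ : [set _ | _] = setT) //; apply/seteqP; split.
  by rewrite (_ : [set _ | _] = set0) //; apply/seteqP; split => x //=; rewrite (negbTE t0).
rewrite (Sl_eq RN) //; have [mg _] := RN n.+1; exact: meas_le.
Qed.

Lemma Q_Sc {d} {R : realType} {X : measurableType d}
  {PX PXb : forall n, probability (n.-tuple X) R}
  {g : forall n, n.-tuple X -> \bar R} {n t} {B : set (n.-tuple X)} :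
  (forall n, RN_version (PX n) (PXb n) (g n)) -> (0 < n)%N ->
  measurable B -> B `<=` ~` Sl g n t ->
  PXb n B <= (expR (- (n%:R * t)))%:E * PX n B.
Proof.
move=> RN n0 mB BS.
have h := @RN_ge _ _ _ (PX n) (PXb n) (g n) (expR (n%:R * t)) B (RN n)
  (ltW (expR_gt0 _)) mB.
have {}h : (expR (n%:R * t))%:E * PXb n B <= PX n B.
  apply: h => x /BS; rewrite (Sl_eq RN) // => /negP; rewrite -ltNge; exact: ltW.
rewrite expRN; apply: (le_trans _ (lee_wpmul2l _ h)); last first.
  by rewrite lee_fin invr_ge0 ltW // expR_gt0.
by rewrite muleA -EFinM mulVf ?mul1e // gt_eqF // expR_gt0.
Qed.

Lemma P_S {d} {R : realType} {X : measurableType d}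
  {PX PXb : forall n, probability (n.-tuple X) R}
  {g : forall n, n.-tuple X -> \bar R} {n t} {B : set (n.-tuple X)} :
  (forall n, RN_version (PX n) (PXb n) (g n)) -> (0 < n)%N ->
  measurable B -> B `<=` Sl g n t ->
  PX n B <= (expR (n%:R * t))%:E * PXb n B.
Proof.
move=> RN n0 mB BS; apply: (@RN_le _ _ _ (PX n) (PXb n) (g n) _ B (RN n)) => //.
by move=> x /BS; rewrite (Sl_eq RN).
Qed.

Lemma ev_small (R : realType) (M x : R) : (0 < x)%R ->
  \forall n \near \oo, (M * expR (- (n%:R * x)) <= 1)%R.
Proof.
move=> x0; near=> n.
have h : (M / x < n%:R)%R by near: n; exact: near_nat_gt.
rewrite expRN ler_pdivrMr ?expR_gt0 // mul1r.
apply: (le_trans _ (expR_ge1Dx _)).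
rewrite ltr_pdivrMr // in h; lra.
Unshelve. all: by end_near. Qed.

Lemma eta_Sl {d} {R : realType} {X : measurableType d}
  {PX : forall n, probability (n.-tuple X) R}
  {g : forall n, n.-tuple X -> \bar R} t :
  Defs.eta PX g t = limn_einf (fun n => rate n (PX n (Sl g n t))).
Proof. by []. Qed.

Lemma grid_step {d} {R : realType} {X : measurableType d}
  {PX PXb : forall n, probability (n.-tuple X) R}
  {g : forall n, n.-tuple X -> \bar R} (t s c0 : R) :
  (forall n, RN_version (PX n) (PXb n) (g n)) ->
  (0 <= s)%R -> (c0 - t)%:E < Defs.eta PX g (t + s) ->
  (exists M : R, \forall n \near \oo,
     PXb n (~` Sl g n (t + s)) <= (M * expR (- (n%:R * c0)))%:E) ->
  (exists M : R, \forall n \near \oo,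
     PXb n (~` Sl g n t) <= (M * expR (- (n%:R * c0)))%:E).
Proof.
move=> RN s0 heta [M HM]; exists (M + 1)%R.
have := liminf_gt heta => Hl.
near=> n.
have n0 : (0 < n)%N by near: n; exists 1%N.
have h1 : PXb n (~` Sl g n (t + s)) <= (M * expR (- (n%:R * c0)))%:E.
  by near: n; exact: HM.
have h2 : (c0 - t)%:E < rate n (PX n (Sl g n (t + s))).
  by near: n; exact: Hl.
have mS u : measurable (Sl g n u) by exact: (Sl_meas RN).
have {}h2 := rate_gt n0 h2.
set B := ~` Sl g n t `&` Sl g n (t + s).
have mB : measurable B by apply: measurableI => //; exact: measurableC.
apply: (@le_trans _ _ (PXb n (~` Sl g n (t + s)) + PXb n B)).
  apply: (le_trans _ (measureU2 _ _ _)) => //; last exact: measurableC.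
  apply: le_measure; rewrite ?inE //; [exact: measurableC|
    by apply: measurableU => //; exact: measurableC|].
  move=> x Sx; have [Sx'|Sx'] := pselect (Sl g n (t + s) x); [right|left] => //.
rewrite mulrDl mul1r EFinD; apply: leeD => //.
apply: (le_trans (Q_Sc RN n0 mB (fun x => @proj1 _ _))).
apply: (@le_trans _ _ ((expR (- (n%:R * t)))%:E * PX n (Sl g n (t + s)))).
  apply: lee_wpmul2l; first by rewrite lee_fin ltW // expR_gt0.
  by apply: le_measure; rewrite ?inE // => x [].
apply: (@le_trans _ _ ((expR (- (n%:R * t)))%:E * (expR (- (n%:R * (c0 - t))))%:E)).
  by apply: lee_wpmul2l; first by rewrite lee_fin ltW // expR_gt0.
by rewrite -EFinM -expRD lee_fin le_eqVlt; apply/orP; left; apply/eqP; congr expR; ring.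
Unshelve. all: by end_near. Qed.

Lemma direct_part {d} {R : realType} {X : measurableType d}
  {PX PXb : forall n, probability (n.-tuple X) R}
  {g : forall n, n.-tuple X -> \bar R} (r E E1 : R) :
  (forall n, RN_version (PX n) (PXb n) (g n)) ->
  (E < E1)%R ->
  (forall t, Defs.eta PX g t < r%:E -> E1%:E <= t%:E + Defs.eta PX g t) ->
  r_achievable PX PXb r E.
Proof.
move=> RN EE1 HB.
pose T0 := (E1 - r)%R.
have hT0 : r%:E <= Defs.eta PX g T0.
  rewrite leNgt; apply/negP => h; have h1 := HB _ h.
  have : T0%:E + Defs.eta PX g T0 < T0%:E + r%:E by rewrite lteD2lE.
  by move=> /(le_lt_trans h1); rewrite -EFinD /T0 subrK ltxx.
pose c := (E1 - E)%R; pose c0 := (E + c / 4)%R; pose s := (c / 2)%R.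
have c0p : (0 < c)%R by rewrite /c subr_gt0.
have heta t : (T0 <= t)%R -> (c0 - t)%:E < Defs.eta PX g (t + s).
  move=> Ht; have [h|h] := ltP (Defs.eta PX g (t + s)) r%:E.
    have h' := HB _ h; rewrite -(lteD2lE (x := (t + s)%:E)) //.
    apply: lt_le_trans h'; rewrite -EFinD lte_fin /c0 /s /c; lra.
  by apply: lt_le_trans h; rewrite lte_fin /c0 /T0 /c; rewrite /T0 in Ht; lra.
have ind : forall k : nat, forall t, (T0 <= t)%R -> (c0 <= t + k%:R * s)%R ->
    exists M : R, \forall n \near \oo,
     PXb n (~` Sl g n t) <= (M * expR (- (n%:R * c0)))%:E.
  elim => [|k IH] t Ht Hk.
    rewrite mul0r addr0 in Hk; exists 1%R; near=> n.
    have n0 : (0 < n)%N by near: n; exists 1%N.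
    have mS : measurable (~` Sl g n t) by apply: measurableC; exact: (Sl_meas RN).
    apply: (le_trans (Q_Sc RN n0 mS (fun x h => h))).
    apply: (@le_trans _ _ ((expR (- (n%:R * t)))%:E * 1)).
      by apply: lee_wpmul2l; [rewrite lee_fin ltW // expR_gt0|exact: probability_le1].
    by rewrite mule1 mul1r lee_fin ler_expR lerN2 ler_wpM2l // ler0n.
  apply: (grid_step t s c0 RN _ (heta t Ht)); first by rewrite /s; lra.
  apply: IH; first by rewrite /s; lra.
  rewrite -[k.+1]addn1 natrD mulrDl mul1r in Hk; lra.
have [k Hk] : exists k : nat, (c0 <= T0 + k%:R * s)%R.
  have [N _ HN] := near_nat_gt _ ((c0 - T0) / s)%R; exists N.
  have := HN N (leqnn N); rewrite ltr_pdivrMr; last by rewrite /s; lra.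
  move=> ?; lra.
have [M HM] := ind k T0 (lexx _) Hk.
exists (fun n => ~` Sl g n T0); split; first by move=> n; apply: measurableC; exact: (Sl_meas RN).
split.
  rewrite (_ : (fun n => _) = (fun n => rate n (PX n (Sl g n T0)))) //.
  by apply/funext => n; rewrite setCK.
apply: liminf_ge; near=> n.
have n0 : (0 < n)%N by near: n; exists 1%N.
have h1 : PXb n (~` Sl g n T0) <= (M * expR (- (n%:R * c0)))%:E.
  by near: n; exact: HM.
have hs : (M * expR (- (n%:R * (c / 4))) <= 1)%R.
  by near: n; apply: ev_small; lra.
apply: rate_ge n0 _; apply: (le_trans h1); rewrite lee_fin.
rewrite (_ : (- (n%:R * c0) = - (n%:R * (c / 4)) + - (n%:R * E))%R); last by rewrite /c0; ring.
rewrite expRD mulrA; apply: (le_trans (ler_wpM2r (ltW (expR_gt0 _)) hs)).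
by rewrite mul1r.
Unshelve. all: by end_near. Qed.

Lemma eta_ge0 {d} {R : realType} {X : measurableType d}
  {PX PXb : forall n, probability (n.-tuple X) R}
  {g : forall n, n.-tuple X -> \bar R} t :
  (forall n, RN_version (PX n) (PXb n) (g n)) -> 0 <= Defs.eta PX g t.
Proof.
move=> RN; rewrite eta_Sl; apply: liminf_ge; apply: nearW => n.
by apply: rate_ge0; apply: probability_le1; exact: (Sl_meas RN).
Qed.

Lemma converse_part {d} {R : realType} {X : measurableType d}
  {PX PXb : forall n, probability (n.-tuple X) R}
  {g : forall n, n.-tuple X -> \bar R} (r E t : R) :
  (forall n, RN_version (PX n) (PXb n) (g n)) ->
  r_achievable PX PXb r E -> Defs.eta PX g t < r%:E ->
  E%:E <= t%:E + Defs.eta PX g t.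
Proof.
move=> RN [A [mA [Hmu Hlam]]] hlt.
have eta0 := eta_ge0 t RN.
have [e he] : exists e : R, Defs.eta PX g t = e%:E.
  move: eta0 hlt; case: (Defs.eta PX g t) => [e||] //=; first by exists e.
rewrite he -EFinD lee_fin leNgt; apply/negP => hE.
rewrite he lte_fin in hlt.
have [m [m0 m1 m2]] : exists m : R, [/\ 0 < m, m <= E - t - e & m <= r - e]%R.
  have [h|h] := leP (E - t - e)%R (r - e)%R.
    by exists (E - t - e)%R; split => //; lra.
  by exists (r - e)%R; split => //; lra.
pose a := (e + m / 4)%R; pose r' := (e + m / 2)%R; pose E' := (t + e + m / 2)%R.
have : a%:E <= Defs.eta PX g t; last by rewrite he lee_fin /a; lra.
have H1 := liminf_gt (lt_le_trans (_ : r'%:E < r%:E) Hmu).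
have H2 := liminf_gt (lt_le_trans (_ : E'%:E < E%:E) Hlam).
rewrite eta_Sl; apply: liminf_ge; near=> n.
have n0 : (0 < n)%N by near: n; exists 1%N.
have h1 : PX n (~` A n) <= (expR (- (n%:R * r')))%:E.
  apply: rate_gt n0 _; near: n; apply: H1; rewrite lte_fin /r'; lra.
have h2 : PXb n (A n) <= (expR (- (n%:R * E')))%:E.
  apply: rate_gt n0 _; near: n; apply: H2; rewrite lte_fin /E'; lra.
have h3 : (2 * expR (- (n%:R * (m / 4))) <= 1)%R.
  by near: n; apply: ev_small; lra.
have mS : measurable (Sl g n t) by exact: (Sl_meas RN).
have mSA : measurable (Sl g n t `&` A n) by exact: measurableI.
have n1 : (0 < n)%N by near: n; exists 1%N.
refine (rate_ge n1 _).
apply: (@le_trans _ _ (PX n (Sl g n t `&` A n) + PX n (~` A n))).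
  have mAc : measurable (~` A n) by apply: measurableC; exact: mA.
  apply: (le_trans _ (measureU2 _ _ _)) => //.
  apply: le_measure; rewrite ?inE //; first by apply: measurableU.
  move=> x Sx; have [Ax|Ax] := pselect (A n x); [left|right] => //.
apply: (@le_trans _ _ ((expR (n%:R * t))%:E * (expR (- (n%:R * E')))%:E + (expR (- (n%:R * r')))%:E)).
  apply: leeD => //; apply: (le_trans (P_S RN n1 mSA (fun x => @proj1 _ _))).
  apply: lee_wpmul2l; first by rewrite lee_fin ltW // expR_gt0.
  apply: le_trans h2; have mAn := mA n; apply: le_measure; rewrite ?inE // => x [].
rewrite -EFinM -EFinD lee_fin -expRD.
rewrite (_ : (n%:R * t + - (n%:R * E') = - (n%:R * (m / 4)) + - (n%:R * a))%R); last by rewrite /E' /a; field.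
rewrite (_ : (- (n%:R * r') = - (n%:R * (m / 4)) + - (n%:R * a))%R); last by rewrite /r' /a; field.
rewrite expRD; have := expR_gt0 (- (n%:R * a))%R; nra.
Unshelve. all: by end_near. Qed.

Lemma le_by_reals {R : realType} (x y : \bar R) :
  (forall E : R, E%:E < x -> E%:E <= y) -> x <= y.
Proof.
case: x => [x||] H; case: y H => [y||] H //; try by rewrite leey.
- rewrite lee_fin leNgt; apply/negP => yx.
  have := H ((x + y) / 2)%R; rewrite !lte_fin !lee_fin => /(_ ltac:(lra)); lra.
- have := H (x - 1)%R; rewrite lte_fin => /(_ ltac:(lra)).
  by rewrite leNgt ltNyr.
- by have := H (y + 1)%R (ltry _); rewrite lee_fin => h; exfalso; lra.
- by have := H 0%R (ltry _); rewrite leNgt ltNyr.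
- by rewrite leNye.
Qed.

Theorem theorem2p1 (d : measure_display) (R : realType) (X : measurableType d)
  (PX PXb : forall n : nat, probability (n.-tuple X) R)
  (g : forall n : nat, n.-tuple X -> \bar R) :
  (forall n, RN_version (PX n) (PXb n) (g n)) ->
  (forall r : R, (0 <= r)%R -> Be PX PXb r = eta_inf PX g r) /\
  Be PX PXb 0%R = +oo.
Proof.
move=> RN.
have main r : (0 <= r)%R -> Be PX PXb r = eta_inf PX g r.
  move=> r0; apply/eqP; rewrite eq_le; apply/andP; split.
    apply: ge_ereal_sup => _ [E hE <-]; apply: le_ereal_inf_tmp => _ [t ht <-].
    exact: converse_part RN hE ht.
  apply: le_by_reals => E hE; apply: ereal_sup_ubound; exists E => //.
  have [E1 [hEE1 hE1]] : exists E1 : R, (E < E1)%R /\ E1%:E <= eta_inf PX g r.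
    move: hE; case: (eta_inf PX g r) => [b||] hE.
    - by exists ((E + b) / 2)%R; rewrite lte_fin in hE; rewrite lee_fin; split; lra.
    - by exists (E + 1)%R; split; [lra|rewrite leey].
    - by rewrite ltNge leNye in hE.
  apply: (direct_part r E E1 RN hEE1) => t ht; apply: (le_trans hE1).
  by apply: ereal_inf_lbound; exists t.
split => //; rewrite main //.
rewrite /eta_inf (_ : [set _ | _ in _] = set0) ?ereal_inf0 //.
apply/seteqP; split => [z [t ht _]|z //]; move: ht => /=.
by rewrite ltNge (eta_ge0 t RN).
Qed.
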